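(* For every $n\ge 1$, the map $\mathcal I^C_{2n}(321)\to 2^{[n]}$, $\pi\mapsto E_\pi$, is a bijection. In particular $|\mathcal I^C_{2n}(321)|=2^n$, and every element of $\mathcal I^C_{2n}(321)$ is uniquely determined by its set of excedances lying in $[n]$.
   Context: $[n]=\{1,\dots,n\}$ and $2^{[n]}$ is the family of all subsets of $[n]$. A permutation $\pi\in\mathcal S_m$ is centrosymmetric if $\pi(i)+\pi(m+1-i)=m+1$ for all $i$; $\mathcal I^C_{m}(321)$ is the set of centrosymmetric involutions in $\mathcal S_m$ avoiding the pattern $321$. An excedance of $\pi$ is a position $i$ with $\pi(i)>i$; $\mathrm{Exc}(\pi)$ is the set of excedances, and for $\pi\in\mathcal I^C_{2n}(321)$, $E_\pi=\mathrm{Exc}(\pi)\cap[n]$. *)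

(* Defs.v *)
(* Positions 1..m are encoded 0-indexed as 'I_m. *)
From mathcomp Require Import all_boot all_order all_fingroup.
Set Implicit Arguments. Unset Strict Implicit. Unset Printing Implicit Defensive.

(* pi(i) + pi(m+1-i) = m+1 (1-indexed)  <->  p i + p (m-1-i) = m-1 (0-indexed) *)
Definition centrosymmetric m (p : {perm 'I_m}) : bool :=
  [forall i : 'I_m, val (p i) + val (p (rev_ord i)) == m.-1].

Definition involutionb m (p : {perm 'I_m}) : bool :=
  [forall i : 'I_m, p (p i) == i].

Definition avoids321 m (p : {perm 'I_m}) : bool :=
  ~~ [exists i : 'I_m, exists j : 'I_m, exists k : 'I_m,
        [&& (val i < val j)%N, (val j < val k)%N, (val (p k) < val (p j))%N & (val (p j) < val (p i))%N]].

Definition I321C m : {set {perm 'I_m}} :=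
  [set p : {perm 'I_m} | [&& involutionb p, centrosymmetric p & avoids321 p]].

Definition Exc m (p : {perm 'I_m}) : {set 'I_m} := [set i : 'I_m | (val i < val (p i))%N].

(* E_p = Exc(p) ∩ [n], as a subset of 'I_n (position j+1 <-> j : 'I_n) *)
Definition Epi n (p : {perm 'I_(n + n)}) : {set 'I_n} :=
  [set j : 'I_n | lshift n j \in Exc p].

(* Main.v *)
Require Import Defs.
From mathcomp Require Import all_boot all_order all_fingroup.
From mathcomp Require Import zify.
Set Implicit Arguments. Unset Strict Implicit. Unset Printing Implicit Defensive.

Lemma nth_ltE (s : seq nat) i j : sorted ltn s -> i < size s -> j < size s ->
  (nth 0 s i < nth 0 s j) = (i < j).
Proof.
move=> ss hi hj; case: (ltngtP i j) => [h|h|->]; last by rewrite ltnn.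
- by apply: (sorted_ltn_nth ltn_trans) => //.
- apply/negbTE; rewrite -leqNgt ltnW //.
  by apply: (sorted_ltn_nth ltn_trans) => //.
Qed.

Lemma memP' (s : seq nat) i : i \in s -> exists2 t, t < size s & i = nth 0 s t.
Proof. by move=> h; exists (index i s); rewrite ?index_mem ?nth_index. Qed.

Record good (m : nat) (xs ds : seq nat) : Prop := Good {
 g_sx : sorted ltn xs; g_sd : sorted ltn ds; g_sz : size xs = size ds;
 g_xm : forall x, x \in xs -> x < m;
 g_dis : forall x, x \in xs -> x \in ds -> False;
 g_rev : ds = rev (map (fun i => m.-1 - i) xs);
 g_c1 : forall t, t < size xs -> nth 0 xs t < nth 0 ds t;
 g_c2 : forall f t, f < m -> f \notin xs -> f \notin ds -> t < size xs ->
          nth 0 xs t < f -> f < nth 0 ds t -> False }.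

Definition fm (xs ds : seq nat) i :=
  if i \in xs then nth 0 ds (index i xs)
  else if i \in ds then nth 0 xs (index i ds) else i.

Lemma g_uniqx m xs ds : good m xs ds -> uniq xs.
Proof. by case=> sx *; apply: (sorted_uniq ltn_trans ltnn). Qed.
Lemma g_uniqd m xs ds : good m xs ds -> uniq ds.
Proof. by case=> _ sd *; apply: (sorted_uniq ltn_trans ltnn). Qed.

Lemma fm_x m xs ds t : good m xs ds -> t < size xs -> fm xs ds (nth 0 xs t) = nth 0 ds t.
Proof.
move=> G ht; rewrite /fm mem_nth // index_uniq //; exact: g_uniqx G.
Qed.

Lemma fm_d m xs ds t : good m xs ds -> t < size xs -> fm xs ds (nth 0 ds t) = nth 0 xs t.
Proof.
move=> G ht; have hd : t < size ds by rewrite -(g_sz G).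
rewrite /fm mem_nth //; case: ifP => [h|_]; first by case: (g_dis G h (mem_nth 0 hd)).
rewrite index_uniq //; exact: g_uniqd G.
Qed.

Lemma fm_o xs ds i : i \notin xs -> i \notin ds -> fm xs ds i = i.
Proof. by rewrite /fm => /negbTE -> /negbTE ->. Qed.

Lemma g_nthx m xs ds t : good m xs ds -> t < size xs -> nth 0 xs t < m.
Proof. by move=> G ht; apply: (g_xm G); rewrite mem_nth. Qed.

Lemma g_dx m xs ds u : good m xs ds -> u < size xs ->
  nth 0 ds (size xs - u.+1) = m.-1 - nth 0 xs u.
Proof.
move=> G hu; rewrite {1}(g_rev G) nth_rev size_map; last by lia.
rewrite (nth_map 0); last by lia.
by congr (_ - nth 0 xs _); lia.
Qed.

Lemma g_xd m xs ds u : good m xs ds -> u < size xs ->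
  nth 0 xs (size xs - u.+1) = m.-1 - nth 0 ds u.
Proof.
move=> G hu; have h1 : size xs - (size xs - u.+1).+1 = u by lia.
have := g_dx G (_ : size xs - u.+1 < size xs); rewrite h1 => ->; last by lia.
have := g_nthx G (_ : size xs - u.+1 < size xs); move=> /(_ ltac:(lia)); lia.
Qed.

Lemma g_nthd m xs ds t : good m xs ds -> t < size xs -> nth 0 ds t < m.
Proof.
move=> G ht; have h1 : t = size xs - (size xs - t.+1).+1 by lia.
rewrite h1 (g_dx G); last by lia.
have := g_nthx G (_ : size xs - t.+1 < size xs); move=> /(_ ltac:(lia)); lia.
Qed.

Lemma fm_lt m xs ds i : good m xs ds -> i < m -> fm xs ds i < m.
Proof.
move=> G hi; case hx: (i \in xs).
  by case/memP': hx => t ht ->; rewrite (fm_x G) // (g_nthd G).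
case hd: (i \in ds).
  case/memP': hd => t ht ->; rewrite -(g_sz G) in ht; by rewrite (fm_d G) // (g_nthx G).
by rewrite fm_o ?hx ?hd.
Qed.

Lemma fm_inv m xs ds i : good m xs ds -> fm xs ds (fm xs ds i) = i.
Proof.
move=> G; case hx: (i \in xs).
  by case/memP': hx => t ht ->; rewrite (fm_x G) // (fm_d G).
case hd: (i \in ds).
  case/memP': hd => t ht ->; rewrite -(g_sz G) in ht; by rewrite (fm_d G) // (fm_x G).
by rewrite !fm_o ?hx ?hd.
Qed.

Lemma fm_exc m xs ds i : good m xs ds -> (i < fm xs ds i) = (i \in xs).
Proof.
move=> G; case hx: (i \in xs).
  by case/memP': hx => t ht ->; rewrite (fm_x G) // (g_c1 G).
case hd: (i \in ds).
  case/memP': hd => t ht ->; rewrite -(g_sz G) in ht; rewrite (fm_d G) //.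
  by apply/negbTE; rewrite -leqNgt ltnW // (g_c1 G).
by rewrite fm_o ?hx ?hd // ltnn.
Qed.

Lemma fm_cs m xs ds i : good m xs ds -> i < m -> fm xs ds (m.-1 - i) = m.-1 - fm xs ds i.
Proof.
move=> G hi; set k := size xs.
case hx: (i \in xs).
  case/memP': hx => t ht ->.
  have e : m.-1 - nth 0 xs t = nth 0 ds (k - t.+1) by rewrite (g_dx G).
  rewrite e (fm_d G); last by rewrite /k; lia.
  rewrite (fm_x G) // (g_xd G) //.
case hd: (i \in ds).
  case/memP': hd => t ht ->; rewrite -(g_sz G) in ht.
  have e : m.-1 - nth 0 ds t = nth 0 xs (k - t.+1) by rewrite (g_xd G).
  rewrite e (fm_x G); last by rewrite /k; lia.
  by rewrite (fm_d G) // (g_dx G).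
rewrite (fm_o (i := i)) ?hx ?hd //; apply: fm_o.
  apply/negP => /memP' [u hu eu].
  have := g_dx G hu; rewrite -eu.
  have -> : m.-1 - (m.-1 - i) = i by lia.
  have hh : size xs - u.+1 < size ds by rewrite -(g_sz G); lia.
  move=> e; move: hd; by rewrite -e mem_nth.
apply/negP => /memP' [u hu eu]; rewrite -(g_sz G) in hu.
have := g_xd G hu; rewrite -eu.
have -> : m.-1 - (m.-1 - i) = i by lia.
move=> e; move: hx; have hh : size xs - u.+1 < size xs by lia.
by rewrite -e mem_nth.
Qed.

Lemma fm_incx m xs ds a b : good m xs ds -> a \in xs -> b \in xs -> a < b ->
  fm xs ds a < fm xs ds b.
Proof.
move=> G /memP' [s hs ->] /memP' [t ht ->].
rewrite (fm_x G) // (fm_x G) // !nth_ltE ?(g_sx G) ?(g_sd G) -?(g_sz G) //.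
Qed.

Lemma fm_incn m xs ds a b : good m xs ds -> a < m -> b < m -> a \notin xs -> b \notin xs ->
  a < b -> fm xs ds a < fm xs ds b.
Proof.
move=> G am bm ax bx ab.
case ad: (a \in ds); case bd: (b \in ds).
- move: ad bd ab => /memP' [s hs ->] /memP' [t ht ->].
  rewrite -(g_sz G) in hs ht.
  rewrite (fm_d G) // (fm_d G) // !nth_ltE ?(g_sx G) ?(g_sd G) -?(g_sz G) //.
- move: ad ab => /memP' [s hs ->] ab; rewrite -(g_sz G) in hs.
  rewrite (fm_d G) // (fm_o (i := b)) ?bd //.
  by apply: ltn_trans ab; apply: (g_c1 G).
- move: bd ab => /memP' [t ht ->] ab; rewrite -(g_sz G) in ht.
  rewrite (fm_d G) // (fm_o (i := a)) ?ad //.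
  rewrite ltnNge; apply/negP => le.
  have ne : nth 0 xs t != a by apply/eqP => e; move: ax; rewrite -e mem_nth.
  apply: (g_c2 G (f := a) (t := t)) => //; first by rewrite ad.
  by rewrite ltn_neqAle ne.
- by rewrite !fm_o ?ad ?bd.
Qed.

Lemma fm_321 m xs ds i j l : good m xs ds -> i < j -> j < l -> l < m ->
  fm xs ds l < fm xs ds j -> fm xs ds j < fm xs ds i -> False.
Proof.
move=> G ij jl lm h1 h2.
have im : i < m by lia.
have jm : j < m by lia.
case jx: (j \in xs).
- case ix: (i \in xs).
    by have := fm_incx G ix jx ij; lia.
  case lx: (l \in xs).
    by have := fm_incx G jx lx jl; lia.
  have := fm_incn G im lm (negbT ix) (negbT lx) (ltn_trans ij jl); lia.
- case ix: (i \in xs); last first.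
    by have := fm_incn G im jm (negbT ix) (negbT jx) ij; lia.
  case lx: (l \in xs); last first.
    by have := fm_incn G jm lm (negbT jx) (negbT lx) jl; lia.
  have := fm_incx G ix lx (ltn_trans ij jl); lia.
Qed.

Lemma sorted_cat_lt (s1 s2 : seq nat) : sorted ltn s1 -> sorted ltn s2 ->
  (forall x y, x \in s1 -> y \in s2 -> x < y) -> sorted ltn (s1 ++ s2).
Proof.
rewrite !(sorted_pairwise ltn_trans) pairwise_cat => -> -> h.
by rewrite andbT andbT; apply/allrelP => x y; apply: h.
Qed.

Lemma sorted_revmap (m : nat) (s : seq nat) : (forall x, x \in s -> x < m) ->
  sorted ltn s -> sorted ltn (rev (map (fun i => m.-1 - i) s)).
Proof.
move=> hs ss; rewrite rev_sorted.
apply: (homo_sorted_in (e := ltn) (P := fun x => x < m)) => //.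
- move=> x y; rewrite !unfold_in /= => hx hy xy. lia.
- by apply/allP => x /hs.
Qed.

Lemma mem_revmap (m : nat) (s : seq nat) y :
  y \in rev (map (fun i => m.-1 - i) s) -> exists2 x, x \in s & y = m.-1 - x.
Proof. by rewrite mem_rev => /mapP. Qed.

Lemma count_iota_le (Q : pred nat) f n : f <= n -> count Q (iota 0 f) <= count Q (iota 0 n).
Proof.
move=> h; have -> : n = f + (n - f) by lia.
by rewrite iotaD count_cat leq_addr.
Qed.

Lemma nth_filter_lt (Q : pred nat) n y t : y <= n -> t < count Q (iota 0 n) ->
  (nth 0 (filter Q (iota 0 n)) t < y) = (t < count Q (iota 0 y)).
Proof.
move=> yn tn; have e : n = y + (n - y) by lia.
move: tn; rewrite e iotaD filter_cat nth_cat size_filter count_cat !add0n => tn.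
case: ifP => h.
  have : nth 0 (filter Q (iota 0 y)) t \in filter Q (iota 0 y) by rewrite mem_nth // size_filter.
  by rewrite mem_filter mem_iota add0n => /andP [_ /andP [_ ->]].
move/negbT: h; rewrite -leqNgt => h.
have : nth 0 (filter Q (iota y (n - y))) (t - count Q (iota 0 y)) \in filter Q (iota y (n - y)).
  by rewrite mem_nth // size_filter ltn_subLR.
rewrite mem_filter mem_iota => /andP [_ /andP [h1 _]].
by apply/negbTE; rewrite -leqNgt.
Qed.

Fixpoint oc (P : pred nat) (i : nat) : nat :=
  if i is k.+1 then (if P k then (oc P k).+1 else (oc P k).-1) else 0.
Definition Qc (P : pred nat) i := ~~ P i && (0 < oc P i).

Lemma count_oc (P : pred nat) i :
  count P (iota 0 i) = oc P i + count (Qc P) (iota 0 i).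
Proof.
elim: i => [|i IH] //.
rewrite -addn1 iotaD !count_cat add0n /= IH /Qc addn0 addn1 /=.
case: (P i) => /=; first lia.
case: (oc P i) => /= [|k]; lia.
Qed.

Definition Al (P : pred nat) n := filter P (iota 0 n).
Definition Cl (P : pred nat) n := filter (Qc P) (iota 0 n).
Definition xsP (P : pred nat) n := Al P n ++ rev (map (fun i => (n + n).-1 - i) (Cl P n)).
Definition dsP (P : pred nat) n := Cl P n ++ rev (map (fun i => (n + n).-1 - i) (Al P n)).

Lemma memAl P n x : (x \in Al P n) = P x && (x < n).
Proof. by rewrite mem_filter mem_iota. Qed.
Lemma memCl P n x : (x \in Cl P n) = Qc P x && (x < n).
Proof. by rewrite mem_filter mem_iota. Qed.

Lemma cnt_le P n : count (Qc P) (iota 0 n) <= count P (iota 0 n).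
Proof. by rewrite (count_oc P n) leq_addl. Qed.

Lemma memhi n (s : seq nat) y : (forall x, x \in s -> x < n) ->
  y \in rev (map (fun i => (n + n).-1 - i) s) -> n <= y < n + n.
Proof. by move=> hs /mem_revmap [x /hs xs ->]; lia. Qed.

Lemma revmapK n (s : seq nat) : (forall x, x \in s -> x < n + n) ->
  map (fun i => (n + n).-1 - i) (map (fun i => (n + n).-1 - i) s) = s.
Proof.
move=> hs; rewrite -map_comp; rewrite -[RHS]map_id; apply/eq_in_map => x /hs /= h; lia.
Qed.

Lemma cnt_at (Q : pred nat) n u : u < count Q (iota 0 n) ->
  count Q (iota 0 (nth 0 (filter Q (iota 0 n)) u)) = u /\ Q (nth 0 (filter Q (iota 0 n)) u)
  /\ nth 0 (filter Q (iota 0 n)) u < n.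
Proof.
move=> hu; set y := nth 0 _ u.
have : y \in filter Q (iota 0 n) by rewrite mem_nth // size_filter.
rewrite mem_filter mem_iota add0n => /andP [Qy /andP [_ yn]].
have h1 := nth_filter_lt (y := y) (ltnW yn) hu; rewrite ltnn in h1.
have h2 := nth_filter_lt (y := y.+1) yn hu; rewrite ltnSn in h2.
rewrite -[y.+1]addn1 iotaD count_cat /= Qy in h2.
split; last by split.
move/esym/negbT: h1; rewrite -leqNgt => h1.
move/esym: h2; rewrite addn0 addn1 ltnS => h2.
by apply/eqP; rewrite eqn_leq h1 h2.
Qed.

Lemma AlCl P n u : u < count (Qc P) (iota 0 n) -> nth 0 (Al P n) u < nth 0 (Cl P n) u.
Proof.
move=> hu; have [cy [Qy yn]] := cnt_at hu.
rewrite /Al /Cl; set y := nth 0 (filter (Qc P) _) u in cy Qy yn *.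
have hP : u < count P (iota 0 n) by apply: leq_trans hu (cnt_le P n).
rewrite (nth_filter_lt (ltnW yn) hP) (count_oc P y) cy.
move: Qy; rewrite /Qc => /andP [_ o]; rewrite -[X in X < _]add0n ltn_add2r //.
Qed.

Lemma rev_nth m (xs ds : seq nat) u : ds = rev (map (fun i => m.-1 - i) xs) -> u < size xs ->
  nth 0 ds (size xs - u.+1) = m.-1 - nth 0 xs u.
Proof.
move=> -> hu; rewrite nth_rev size_map; last by lia.
rewrite (nth_map 0); last by lia.
by congr (_ - nth 0 xs _); lia.
Qed.

Lemma rev_sym m (xs ds : seq nat) : (forall x, x \in xs -> x < m) ->
  ds = rev (map (fun i => m.-1 - i) xs) -> xs = rev (map (fun i => m.-1 - i) ds).
Proof.
move=> hs ->; rewrite map_rev revK -map_comp -[LHS]map_id.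
apply/eq_in_map => x /hs /= h; lia.
Qed.

Lemma nth_rm (f : nat -> nat) (s : seq nat) v : v < size s ->
  nth 0 (rev (map f s)) v = f (nth 0 s (size s - v.+1)).
Proof.
move=> hv; rewrite nth_rev size_map // (nth_map 0) //; lia.
Qed.

Lemma c2_low P n f t : f < n -> f \notin xsP P n -> f \notin dsP P n ->
  t < size (xsP P n) -> nth 0 (xsP P n) t < f -> f < nth 0 (dsP P n) t -> False.
Proof.
move=> fn fx fd ht h1 h2.
have fA : f \notin Al P n by move: fx; rewrite /xsP mem_cat negb_or => /andP [].
have fC : f \notin Cl P n by move: fd; rewrite /dsP mem_cat negb_or => /andP [].
rewrite memAl fn andbT in fA; rewrite memCl fn andbT /Qc fA /= -leqNgt leqn0 in fC.
have ta : t < count P (iota 0 n).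
  rewrite ltnNge; apply/negP => le.
  have tf : (t < count P (iota 0 n)) = false by rewrite ltnNge le.
  move: h1; rewrite /xsP nth_cat /Al size_filter tf.
  have hv : t - count P (iota 0 n) < size (rev (map (fun i => (n + n).-1 - i) (Cl P n))).
    move: ht; rewrite /xsP size_cat /Al size_filter; lia.
  have hC : forall x, x \in Cl P n -> x < n by move=> x; rewrite memCl => /andP [].
  have /andP [h3 _] := memhi hC (mem_nth 0 hv).
  move=> h4; by have := ltn_trans (leq_ltn_trans h3 h4) fn; rewrite ltnn.
move: h1; rewrite /xsP nth_cat /Al size_filter ta -/(Al P n).
rewrite (nth_filter_lt (ltnW fn) ta) (count_oc P f) (eqP fC) add0n => tc.
have tc' : t < count (Qc P) (iota 0 n) by apply: leq_trans tc (count_iota_le _ (ltnW fn)).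
move: h2; rewrite /dsP nth_cat /Cl size_filter tc'.
have := nth_filter_lt (ltnW fn) tc'; rewrite tc => h3 h4.
by have := ltn_trans h4 h3; rewrite ltnn.
Qed.

Lemma rlt m x y : x < y -> y < m -> m.-1 - y < m.-1 - x.
Proof. lia. Qed.

Lemma goodP P n : good (n + n) (xsP P n) (dsP P n).
Proof.
have hA : forall x, x \in Al P n -> x < n by move=> x; rewrite memAl => /andP [].
have hC : forall x, x \in Cl P n -> x < n by move=> x; rewrite memCl => /andP [].
have hA2 : forall x, x \in Al P n -> x < n + n by move=> x /hA; lia.
have hC2 : forall x, x \in Cl P n -> x < n + n by move=> x /hC; lia.
have sA : sorted ltn (Al P n) by apply: sorted_filter; [exact: ltn_trans | exact: iota_ltn_sorted].
have sC : sorted ltn (Cl P n) by apply: sorted_filter; [exact: ltn_trans | exact: iota_ltn_sorted].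
have sCA : size (Cl P n) <= size (Al P n) by rewrite /Al /Cl !size_filter cnt_le.
have hxm : forall x, x \in xsP P n -> x < n + n.
  move=> x; rewrite /xsP mem_cat => /orP [/hA2 //| /(memhi hC) /andP [] //].
have hdm : forall x, x \in dsP P n -> x < n + n.
  move=> x; rewrite /dsP mem_cat => /orP [/hC2 //| /(memhi hA) /andP [] //].
have hds : dsP P n = rev (map (fun i => (n + n).-1 - i) (xsP P n)).
  by rewrite /xsP /dsP map_cat rev_cat map_rev revK revmapK.
have hxs := rev_sym hxm hds.
have hsz : size (xsP P n) = size (dsP P n).
  by rewrite /xsP /dsP !size_cat !size_rev !size_map addnC.
constructor => //.
- apply: sorted_cat_lt => //; first exact: sorted_revmap.
  by move=> x y /hA xn /(memhi hC) /andP [ny _]; apply: leq_trans ny.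
- apply: sorted_cat_lt => //; first exact: sorted_revmap.
  by move=> x y /hC xn /(memhi hA) /andP [ny _]; apply: leq_trans ny.
- move=> x; rewrite /xsP /dsP !mem_cat => /orP [xA | xC] /orP [xC' | xA'].
  + by move: xA xC'; rewrite memAl memCl /Qc => /andP [-> _] /andP [].
  + by have := hA _ xA; have /andP [h _] := memhi hA xA'; lia.
  + by have := hC _ xC'; have /andP [h _] := memhi hC xC; lia.
  + move: xC xA' => /mem_revmap [y yC ->] /mem_revmap [z zA e].
    have yz : y = z by have := hC _ yC; have := hA _ zA; lia.
    by move: yC zA; rewrite yz memAl memCl /Qc => /andP [/andP [/negbTE ->]].
- move=> t ht; rewrite /xsP /dsP !nth_cat.
  case: (ltnP t (size (Cl P n))) => tc.
    rewrite (leq_trans tc sCA); apply: AlCl; by rewrite /Cl size_filter in tc.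
  case: (ltnP t (size (Al P n))) => ta.
    have h1 := hA _ (mem_nth 0 ta).
    have hv : t - size (Cl P n) < size (rev (map (fun i => (n + n).-1 - i) (Al P n))).
      rewrite size_rev size_map; move: ht; rewrite /xsP size_cat size_rev size_map; lia.
    have /andP [h2 _] := memhi hA (mem_nth 0 hv).
    exact: leq_trans h1 h2.
  have hk : t < size (Al P n) + size (Cl P n).
    by move: ht; rewrite /xsP size_cat size_rev size_map.
  rewrite !nth_rm; try lia.
  have -> : size (Cl P n) - (t - size (Al P n)).+1 = size (Al P n) - (t - size (Cl P n)).+1 by lia.
  set u := size (Al P n) - _.
  have uc : u < size (Cl P n) by rewrite /u; lia.
  apply: rlt; last exact: hC2 _ (mem_nth 0 uc).
  apply: AlCl; by rewrite /Cl size_filter in uc.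
- move=> f t fm fx fd ht h1 h2.
  case: (ltnP f n) => fn; first exact: (c2_low fn fx fd ht h1 h2).
  have ht' : t < size (dsP P n) by rewrite -hsz.
  have e1 := rev_nth hds ht.
  have e2 := rev_nth hxs ht'.
  have xt := hxm _ (mem_nth 0 ht).
  have dt := hdm _ (mem_nth 0 ht').
  apply: (c2_low (P := P) (n := n) (f := (n + n).-1 - f) (t := size (xsP P n) - t.+1)).
  + lia.
  + apply/negP => hx; move: fd; rewrite hds mem_rev.
    have -> : f = (n + n).-1 - ((n + n).-1 - f) by lia.
    by rewrite map_f.
  + apply/negP => hx; move: fx; rewrite hxs mem_rev.
    have -> : f = (n + n).-1 - ((n + n).-1 - f) by lia.
    by rewrite map_f.
  + lia.
  + rewrite hsz e2; exact: rlt.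
  + rewrite e1; exact: rlt.
Qed.
Lemma vo m (i : 'I_m) : val i = nat_of_ord i. Proof. by []. Qed.

Lemma I_inv m (p : {perm 'I_m}) : p \in I321C m -> forall i, p (p i) = i.
Proof. by rewrite inE => /and3P [/forallP h _ _] i; apply/eqP. Qed.

Lemma I_cs m (p : {perm 'I_m}) : p \in I321C m -> forall i,
  val (p (rev_ord i)) = m.-1 - val (p i).
Proof.
rewrite inE => /and3P [_ /forallP h _] i; move/eqP: (h i) => e; lia.
Qed.

Lemma I_av m (p : {perm 'I_m}) : p \in I321C m -> forall i j k : 'I_m,
  val i < val j -> val j < val k -> val (p k) < val (p j) -> val (p j) < val (p i) -> False.
Proof.
rewrite inE => /and3P [_ _ /negP h] i j k h1 h2 h3 h4; apply: h.
by apply/existsP; exists i; apply/existsP; exists j; apply/existsP; exists k; apply/and4P.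
Qed.

Lemma E_tr n (p q : {perm 'I_(n + n)}) : Epi p = Epi q -> forall i : 'I_(n + n),
  val i < n -> (val i < val (p i)) = (val i < val (q i)).
Proof.
move=> E i hi; have := congr1 (fun X : {set 'I_n} => Ordinal hi \in X) E; rewrite /= !inE.
have -> : lshift n (Ordinal hi) = i by apply: val_inj.
by [].
Qed.

Lemma step_lt n (p q : {perm 'I_(n + n)}) (i : 'I_(n + n)) :
  p \in I321C (n + n) -> q \in I321C (n + n) -> Epi p = Epi q ->
  (forall j : 'I_(n + n), val j < val i -> p j = q j) ->
  val i < n -> val i < val (p i) -> val (p i) < val (q i) -> False.
Proof.
move=> Hp Hq E IH hi h1 h2.
set a := p i; set b := q i.
have qb : q b = i by rewrite /b (I_inv Hq).
have pa : p a = i by rewrite /a (I_inv Hp).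
case: (ltngtP (val (q a)) (val a)) => h3.
- set c := q a.
  have qc : q c = a by rewrite /c (I_inv Hq).
  case: (ltngtP (val c) (val i)) => h4.
  + have := IH c h4; rewrite qc => e.
    have : c = i by apply: (@perm_inj _ p); rewrite e.
    by move=> ec; move: h4; rewrite ec ltnn.
  + apply: (I_av Hq (i := i) (j := c) (k := b)) => //.
    * by apply: ltn_trans h3 h2.
    * by rewrite qb /c (I_inv Hq).
    * by rewrite /c (I_inv Hq).
  + have ec : c = i by apply: val_inj.
    move: qc; rewrite ec => qi; move: h2; by rewrite /b qi ltnn.
- case: (ltnP (val a) n) => han.
  + have := E_tr E han; rewrite pa h3 => e; have := ltn_trans h1 e; by rewrite ltnn.
  + have ha' : val (rev_ord a) < n.
      have := ltn_ord a; have han' : n <= nat_of_ord a := han; rewrite /=; lia.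
    have := E_tr E ha'; rewrite (I_cs Hp) (I_cs Hq) pa /=.
    have := ltn_ord a; have := ltn_ord (q a).
    have h1' : nat_of_ord i < nat_of_ord a := h1.
    have h3' : nat_of_ord a < nat_of_ord (q a) := h3.
    move=> qan an e.
    have L : n + n - a.+1 < (n + n).-1 - i by lia.
    have R : ~~ (n + n - a.+1 < (n + n).-1 - q a) by rewrite -leqNgt; lia.
    by rewrite e in L; rewrite L in R.
- have ea : q a = a by apply: val_inj.
  apply: (I_av Hq (i := i) (j := a) (k := b)) => //.
  + by rewrite qb ea.
  + by rewrite ea.
Qed.

Lemma step n (p q : {perm 'I_(n + n)}) (i : 'I_(n + n)) :
  p \in I321C (n + n) -> q \in I321C (n + n) -> Epi p = Epi q ->
  (forall j : 'I_(n + n), val j < val i -> p j = q j) -> p i = q i.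
Proof.
move=> Hp Hq E IH.
case: (ltnP (val i) n) => hi; last first.
  have hr : val (rev_ord i) < val i.
    have := ltn_ord i; have hi' : n <= nat_of_ord i := hi; rewrite /=; lia.
  have := IH _ hr => e.
  have := I_cs Hp i; have := I_cs Hq i; rewrite e => -> e2.
  apply: val_inj; have := ltn_ord (p i); have := ltn_ord (q i).
  have e2' : (n + n).-1 - nat_of_ord (q i) = (n + n).-1 - nat_of_ord (p i) := e2.
  rewrite /=; lia.
have IH' : forall j : 'I_(n + n), val j < val i -> q j = p j by move=> j /IH ->.
have E' := esym E.
case: (ltngtP (val (p i)) (val i)) => hp.
- have := IH _ hp; rewrite (I_inv Hp) => e.
  by rewrite {2}e (I_inv Hq).
- case: (ltngtP (val (q i)) (val i)) => hq.
  + have := IH _ hq; rewrite (I_inv Hq) => e.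
    by rewrite -{1}e (I_inv Hp).
  + case: (ltngtP (val (p i)) (val (q i))) => h.
    * by case: (step_lt Hp Hq E IH hi hp h).
    * by case: (step_lt Hq Hp E' IH' hi hq h).
    * exact: val_inj.
  + have := E_tr E hi; rewrite hp hq ltnn //.
- case: (ltngtP (val (q i)) (val i)) => hq.
  + have := IH _ hq; rewrite (I_inv Hq) => e.
    by rewrite -{1}e (I_inv Hp).
  + have := E_tr E hi; rewrite hp hq ltnn //.
  + by apply: val_inj; rewrite hp hq.
Qed.

Lemma uniqI n (p q : {perm 'I_(n + n)}) :
  p \in I321C (n + n) -> q \in I321C (n + n) -> Epi p = Epi q -> p = q.
Proof.
move=> Hp Hq E; apply/permP.
suff H : forall k (i : 'I_(n + n)), val i < k -> p i = q i.
  by move=> i; apply: (H (val i).+1).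
elim=> [|k IH] i hi //.
apply: step => // j hj; apply: IH; lia.
Qed.

Definition PS n (S : {set 'I_n}) : pred nat :=
  fun i => [exists j : 'I_n, (val j == i) && (j \in S)].

Lemma PS_ord n (S : {set 'I_n}) (j : 'I_n) : PS S j = (j \in S).
Proof.
apply/existsP/idP => [[k /andP [/eqP e kS]] | jS]; last by exists j; rewrite eqxx.
by have -> : j = k by apply: val_inj.
Qed.

Definition fS n (S : {set 'I_n}) := fm (xsP (PS S) n) (dsP (PS S) n).

Definition pfun n (S : {set 'I_n}) (i : 'I_(n + n)) : 'I_(n + n) :=
  Ordinal (fm_lt (goodP (PS S) n) (ltn_ord i)).

Lemma pfun_inj n (S : {set 'I_n}) : injective (pfun S).
Proof.
move=> i j /(congr1 val) /= e.
apply: val_inj => /=.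
have := congr1 (fm (xsP (PS S) n) (dsP (PS S) n)) e.
by rewrite !(fm_inv _ (goodP (PS S) n)).
Qed.

Definition mkp n (S : {set 'I_n}) : {perm 'I_(n + n)} := perm (@pfun_inj n S).

Lemma mkpE n (S : {set 'I_n}) i : val (mkp S i) = fS S (val i).
Proof. by rewrite /mkp permE. Qed.

Lemma mkp_in n (S : {set 'I_n}) : mkp S \in I321C (n + n).
Proof.
have G := goodP (PS S) n.
rewrite inE; apply/and3P; split.
- apply/forallP => i; apply/eqP/val_inj; rewrite !mkpE; exact: (fm_inv _ G).
- apply/forallP => i; rewrite !mkpE /=.
  have hi := ltn_ord i.
  have -> : n + n - i.+1 = (n + n).-1 - i by lia.
  rewrite /fS (fm_cs G hi).
  have := fm_lt G hi; lia.
- apply/negP => /existsP [i /existsP [j /existsP [k /and4P [h1 h2 h3 h4]]]].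
  rewrite !mkpE in h3 h4.
  exact: (fm_321 G h1 h2 (ltn_ord k) h3 h4).
Qed.

Lemma mkp_E n (S : {set 'I_n}) : Epi (mkp S) = S.
Proof.
have G := goodP (PS S) n.
apply/setP => j; rewrite !inE mkpE /fS /= (fm_exc _ G) /xsP mem_cat memAl PS_ord ltn_ord andbT.
case jS: (j \in S) => //=.
apply/negP => /(memhi (s := Cl (PS S) n)) h.
have /andP [h' _] : n <= j < n + n.
  by apply: h => x; rewrite memCl => /andP [].
by have := ltn_ord j; lia.
Qed.

Theorem mainTheorem5 (n : nat) (hn : 1 <= n) :
  [/\ {in I321C (n + n) &, injective (@Epi n)},
      (forall S : {set 'I_n}, exists2 p, p \in I321C (n + n) & Epi p = S)
    & #|I321C (n + n)| = 2 ^ n].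
Proof.
have inj : {in I321C (n + n) &, injective (@Epi n)}.
  by move=> p q Hp Hq E; apply: uniqI.
have sur : forall S : {set 'I_n}, exists2 p, p \in I321C (n + n) & Epi p = S.
  by move=> S; exists (mkp S); [exact: mkp_in | exact: mkp_E].
split => //.
rewrite -(card_in_imset inj).
have -> : [set Epi x | x in I321C (n + n)] = [set: {set 'I_n}].
  apply/setP => S; rewrite inE; have [p Hp <-] := sur S; exact: imset_f.
have -> : [set: {set 'I_n}] = powerset [set: 'I_n].
  by apply/setP => S; rewrite !inE subsetT.
by rewrite card_powerset cardsT card_ord.
Qed.
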